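(* Let $\phi$ and $\psi$ be linear formulae on variable sets $\mathcal{V}_1$ and $\mathcal{V}_2$ respectively, and let $\mathsf r:\phi\to\psi$ be a linear inference. Then there is a linear inference $\mathsf r':\phi'\to\psi'$ with $\phi'$ and $\psi'$ linear formulae on $\mathcal{V}_1\cap\mathcal{V}_2$ such that $\mathsf r$ is $\{\mathsf{s},\mathsf{m},\mathsf r'\}$-derivable with units.
   Context: Fix a countably infinite set of variables. Linear formulae on a finite set $\mathcal{V}$ of variables are defined inductively: - $\top,\bot$ are linear formulae on $\emptyset$. - $x$ and $\neg x$ are linear formulae on $\{x\}$. - If $\phi$ is on $\mathcal{V}_1$, $\psi$ is on $\mathcal{V}_2$ and $\mathcal{V}_1\cap\mathcal{V}_2=\emptyset$, then $\phi\lor\psi$ and $\phi\land\psi$ are on $\mathcal{V}_1\cup\mathcal{V}_2$. Formulae are evaluated under Boolean assignments as usual. A linear inference $\phi\to\psi$ is a pair of linear formulae (possibly on different variable sets) such that every assignment satisfying $\phi$ satisfies $\psi$. A congruence is an equivalence relation closed under $\land$- and $\lor$-contexts on either side. - $\sim_{\mathsf{ac}}$ is the smallest congruence containing commutativity and associativity of $\land,\lor$. - $\sim_{\mathsf{u}}$ is the smallest congruence containing $\phi\land\top\sim\phi$, $\top\land\phi\sim\phi$, $\phi\lor\bot\sim\phi$, $\bot\lor\phi\sim\phi$, $\phi\land\bot\sim\bot$, $\bot\land\phi\sim\bot$, $\phi\lor\top\sim\top$, $\top\lor\phi\sim\top$. - $\sim_{\mathsf{acu}}$ is the smallest congruence containing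 both. For a set $S$ of linear inferences, $\to_S$ is the smallest relation containing $S$ and closed under substitution (of linear formulae for variables, keeping linearity) and contexts. Write $\phi\rightsquigarrow_{S\mathsf u}\psi$ if $\phi\sim_{\mathsf{acu}}\phi'\to_S\psi'\sim_{\mathsf{acu}}\psi$ for some $\phi',\psi'$. An inference $\phi\to\psi$ is $S$-derivable with units if $\phi,\psi$ are related by the reflexive-transitive closure of $\rightsquigarrow_{S\mathsf u}\cup\sim_{\mathsf{acu}}$. Switch $\mathsf{s}$ is $x\land(y\lor z)\to(x\land y)\lor z$; medial $\mathsf{m}$ is $(w\land x)\lor(y\land z)\to(w\lor y)\land(x\lor z)$. *)

(* Defs.v *)
From mathcomp Require Import all_boot.
Set Implicit Arguments. Unset Strict Implicit. Unset Printing Implicit Defensive.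

Inductive form : Type :=
| Top : form
| Bot : form
| Var : nat -> form
| NVar : nat -> form
| And : form -> form -> form
| Or : form -> form -> form.

Fixpoint vars (f : form) : seq nat :=
  match f with
  | Top | Bot => [::]
  | Var x | NVar x => [:: x]
  | And a b | Or a b => vars a ++ vars b
  end.

Definition linear (f : form) : bool := uniq (vars f).

Definition linear_on (f : form) (V : nat -> Prop) : Prop :=
  linear f /\ forall x, x \in vars f <-> V x.

Fixpoint eval (s : nat -> bool) (f : form) : bool :=
  match f with
  | Top => true
  | Bot => false
  | Var x => s x
  | NVar x => ~~ s x
  | And a b => eval s a && eval s b
  | Or a b => eval s a || eval s b
  end.

Definition linear_inference (phi psi : form) : Prop :=
  linear phi /\ linear psi /\ forall s, eval s phi -> eval s psi.

Fixpoint dual (f : form) : form :=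
  match f with
  | Top => Bot
  | Bot => Top
  | Var x => NVar x
  | NVar x => Var x
  | And a b => Or (dual a) (dual b)
  | Or a b => And (dual a) (dual b)
  end.

Fixpoint subst (sg : nat -> form) (f : form) : form :=
  match f with
  | Top => Top
  | Bot => Bot
  | Var x => sg x
  | NVar x => dual (sg x)
  | And a b => And (subst sg a) (subst sg b)
  | Or a b => Or (subst sg a) (subst sg b)
  end.

Inductive ac_ax : form -> form -> Prop :=
| ac_and_comm a b : ac_ax (And a b) (And b a)
| ac_or_comm a b : ac_ax (Or a b) (Or b a)
| ac_and_assoc a b c : ac_ax (And a (And b c)) (And (And a b) c)
| ac_or_assoc a b c : ac_ax (Or a (Or b c)) (Or (Or a b) c).

Inductive u_ax : form -> form -> Prop :=
| u_andT_r a : u_ax (And a Top) a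
| u_andT_l a : u_ax (And Top a) a
| u_orB_r a : u_ax (Or a Bot) a
| u_orB_l a : u_ax (Or Bot a) a
| u_andB_r a : u_ax (And a Bot) Bot
| u_andB_l a : u_ax (And Bot a) Bot
| u_orT_r a : u_ax (Or a Top) Top
| u_orT_l a : u_ax (Or Top a) Top.

Inductive cong (E : form -> form -> Prop) : form -> form -> Prop :=
| cong_ax a b : E a b -> cong E a b
| cong_refl a : cong E a a
| cong_sym a b : cong E a b -> cong E b a
| cong_trans a b c : cong E a b -> cong E b c -> cong E a c
| cong_and_l a b c : cong E a b -> cong E (And a c) (And b c)
| cong_and_r a b c : cong E a b -> cong E (And c a) (And c b)
| cong_or_l a b c : cong E a b -> cong E (Or a c) (Or b c)
| cong_or_r a b c : cong E a b -> cong E (Or c a) (Or c b).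

Definition ac_eq := cong ac_ax.
Definition u_eq := cong u_ax.
Definition acu_eq := cong (fun a b => ac_ax a b \/ u_ax a b).

Inductive rstep (S : form -> form -> Prop) : form -> form -> Prop :=
| rstep_inst a b sg :
    S a b -> linear (subst sg a) -> linear (subst sg b) ->
    rstep S (subst sg a) (subst sg b)
| rstep_and_l a b c : rstep S a b -> linear (And a c) -> linear (And b c) ->
    rstep S (And a c) (And b c)
| rstep_and_r a b c : rstep S a b -> linear (And c a) -> linear (And c b) ->
    rstep S (And c a) (And c b)
| rstep_or_l a b c : rstep S a b -> linear (Or a c) -> linear (Or b c) ->
    rstep S (Or a c) (Or b c)
| rstep_or_r a b c : rstep S a b -> linear (Or c a) -> linear (Or c b) ->
    rstep S (Or c a) (Or c b).

Definition rstep_u (S : form -> form -> Prop) (phi psi : form) : Prop :=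
  exists phi' psi', acu_eq phi phi' /\ rstep S phi' psi' /\ acu_eq psi' psi.

Definition dstep (S : form -> form -> Prop) (a b : form) : Prop :=
  linear a /\ linear b /\ (rstep_u S a b \/ acu_eq a b).

Inductive rtc (R : form -> form -> Prop) : form -> form -> Prop :=
| rtc_refl a : rtc R a a
| rtc_step a b c : R a b -> rtc R b c -> rtc R a c.

Definition derivable_u (S : form -> form -> Prop) (phi psi : form) : Prop :=
  rtc (dstep S) phi psi.

Definition switch_l : form := And (Var 0) (Or (Var 1) (Var 2)).
Definition switch_r : form := Or (And (Var 0) (Var 1)) (Var 2).
Definition medial_l : form := Or (And (Var 0) (Var 1)) (And (Var 2) (Var 3)).
Definition medial_r : form := And (Or (Var 0) (Var 2)) (Or (Var 1) (Var 3)).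

Definition smr (phi' psi' : form) (a b : form) : Prop :=
  (a = switch_l /\ b = switch_r) \/ (a = medial_l /\ b = medial_r) \/
  (a = phi' /\ b = psi').

(* Main.v *)
Require Import Defs.
From mathcomp Require Import all_boot.

Inductive ctx := Hole | CAL of ctx & form | CAR of form & ctx
               | COL of ctx & form | COR of form & ctx.

Fixpoint plug (c : ctx) (g : form) : form :=
  match c with
  | Hole => g
  | CAL c f => plug c (And g f)
  | CAR f c => plug c (And f g)
  | COL c f => plug c (Or g f)
  | COR f c => plug c (Or f g)
  end.

Lemma vars_plug c : exists l r, forall g, vars (plug c g) = l ++ vars g ++ r.
Proof.
elim: c => [|c [l [r IH]] f|f c [l [r IH]]|c [l [r IH]] f|f c [l [r IH]]].
- by exists [::], [::] => g; rewrite cats0.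
- by exists l, (vars f ++ r) => g /=; rewrite IH /= -catA.
- by exists (l ++ vars f), r => g /=; rewrite IH /= -!catA.
- by exists l, (vars f ++ r) => g /=; rewrite IH /= -catA.
- by exists (l ++ vars f), r => g /=; rewrite IH /= -!catA.
Qed.

Lemma lin_plug_sub c a b : subseq (vars b) (vars a) -> linear (plug c a) -> linear (plug c b).
Proof.
move=> sb; have [l [r E]] := vars_plug c; rewrite /linear !E.
apply: subseq_uniq; apply: cat_subseq => //; apply: cat_subseq => //.
Qed.

Lemma lin_plug_inner c a : linear (plug c a) -> linear a.
Proof.
have [l [r E]] := vars_plug c; rewrite /linear E.
by rewrite cat_uniq => /and3P [_ _]; rewrite cat_uniq => /andP[].
Qed.

Lemma rstep_plug S c : forall a b, rstep S a b -> linear (plug c a) -> linear (plug c b) ->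
  rstep S (plug c a) (plug c b).
Proof.
elim: c => [//|c IH f|f c IH|c IH f|f c IH] a b H la lb /=; apply: IH => //.
- by apply: rstep_and_l => //; [exact: (@lin_plug_inner c _ la)|exact: (@lin_plug_inner c _ lb)].
- by apply: rstep_and_r => //; [exact: (@lin_plug_inner c _ la)|exact: (@lin_plug_inner c _ lb)].
- by apply: rstep_or_l => //; [exact: (@lin_plug_inner c _ la)|exact: (@lin_plug_inner c _ lb)].
- by apply: rstep_or_r => //; [exact: (@lin_plug_inner c _ la)|exact: (@lin_plug_inner c _ lb)].
Qed.

Lemma acu_plug c : forall a b, acu_eq a b -> acu_eq (plug c a) (plug c b).
Proof.
elim: c => [//|c IH f|f c IH|c IH f|f c IH] a b H /=; apply: IH.
- exact: cong_and_l.
- exact: cong_and_r.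
- exact: cong_or_l.
- exact: cong_or_r.
Qed.

Lemma rtc_trans R a b c : rtc R a b -> rtc R b c -> rtc R a c.
Proof. by elim=> // x y z H _ IH /IH; apply: rtc_step. Qed.

Lemma acu_u a b : u_ax a b -> acu_eq a b.
Proof. by move=> h; apply: cong_ax; right. Qed.

Section Steps.
Variables phi' psi' : form.
Notation S := (smr phi' psi').

Lemma stepT c A : linear (plug c A) -> dstep S (plug c A) (plug c Top).
Proof.
move=> lA; split=> //; split; first by apply: lin_plug_sub lA; exact: sub0seq.
left; exists (plug c (And A (Or Top Top))), (plug c (Or (And A Top) Top)).
have l1 : linear (plug c (And A (Or Top Top))).
  by apply: lin_plug_sub lA; rewrite /= !cats0.
have l2 : linear (plug c (Or (And A Top) Top)).
  by apply: lin_plug_sub lA; rewrite /= !cats0.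
split; first apply: acu_plug.
  apply: cong_sym; apply: (cong_trans (b := And A Top)); first by apply: cong_and_r; apply: acu_u; exact: u_orT_r.
  exact: acu_u (u_andT_r A).
split; last by apply: acu_plug; apply: acu_u (u_orT_r _).
apply: rstep_plug => //.
pose sg := fun n => match n with 0 => A | _ => Top end.
have := @rstep_inst S switch_l switch_r sg.
apply; first by left.
- exact: lin_plug_inner l1.
- exact: lin_plug_inner l2.
Qed.

Lemma stepB c A : linear (plug c A) -> dstep S (plug c Bot) (plug c A).
Proof.
move=> lA; split; first by apply: lin_plug_sub lA; exact: sub0seq.
split=> //.
left; exists (plug c (And Bot (Or Bot A))), (plug c (Or (And Bot Bot) A)).
have l1 : linear (plug c (And Bot (Or Bot A))) by apply: lin_plug_sub lA.
have l2 : linear (plug c (Or (And Bot Bot) A)) by apply: lin_plug_sub lA.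
split; first by apply: acu_plug; apply: cong_sym; apply: acu_u (u_andB_l _).
split; last first.
  apply: acu_plug; apply: (cong_trans (b := Or Bot A)); first by apply: cong_or_l; apply: acu_u; exact: u_andB_l.
  exact: acu_u (u_orB_l A).
apply: rstep_plug => //.
pose sg := fun n => match n with 2 => A | _ => Bot end.
have := @rstep_inst S switch_l switch_r sg.
apply; first by left.
- exact: lin_plug_inner l1.
- exact: lin_plug_inner l2.
Qed.
End Steps.

Fixpoint repl (k : form) (P : pred nat) (f : form) : form :=
  match f with
  | Var x => if P x then k else Var x
  | NVar x => if P x then k else NVar x
  | And a b => And (repl k P a) (repl k P b)
  | Or a b => Or (repl k P a) (repl k P b)
  | _ => f
  end.

Lemma repl_sub k P f : vars k = [::] -> subseq (vars (repl k P f)) (vars f).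
Proof.
move=> hk; elim: f => [||x|x|a iha b ihb|a iha b ihb].
- exact: subseq_refl.
- exact: subseq_refl.
- by rewrite [repl _ _ _]/=; case: (P x); rewrite ?hk ?sub0seq ?subseq_refl.
- by rewrite [repl _ _ _]/=; case: (P x); rewrite ?hk ?sub0seq ?subseq_refl.
- exact: cat_subseq.
- exact: cat_subseq.
Qed.

Lemma mem_repl k P f x : vars k = [::] ->
  (x \in vars (repl k P f)) = (x \in vars f) && ~~ P x.
Proof.
move=> hk; elim: f => [||y|y|a iha b ihb|a iha b ihb]; rewrite ?in_nil //.
- rewrite [repl _ _ _]/= [vars (Var y)]/= inE.
  case Py: (P y); rewrite ?hk ?in_nil ?inE.
    by case: eqP => // ->; rewrite Py.
  by case: eqP => // ->; rewrite Py.
- rewrite [repl _ _ _]/= [vars (NVar y)]/= inE.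
  case Py: (P y); rewrite ?hk ?in_nil ?inE.
    by case: eqP => // ->; rewrite Py.
  by case: eqP => // ->; rewrite Py.
- by rewrite /= !mem_cat iha ihb andb_orl.
- by rewrite /= !mem_cat iha ihb andb_orl.
Qed.

Lemma derT phi' psi' (P : pred nat) f : forall c, linear (plug c f) ->
  derivable_u (smr phi' psi') (plug c f) (plug c (repl Top P f)).
Proof.
elim: f => [||x|x|a iha b ihb|a iha b ihb] c lf /=; try exact: rtc_refl.
- case: (P x); last exact: rtc_refl.
  by apply: rtc_step (stepT _ _ _ _ lf) (rtc_refl _ _).
- case: (P x); last exact: rtc_refl.
  by apply: rtc_step (stepT _ _ _ _ lf) (rtc_refl _ _).
- apply: rtc_trans (iha (CAL c b) lf) _.
  apply: (ihb (CAR _ c)); apply: lin_plug_sub lf => /=.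
  by apply: cat_subseq => //; exact: repl_sub.
- apply: rtc_trans (iha (COL c b) lf) _.
  apply: (ihb (COR _ c)); apply: lin_plug_sub lf => /=.
  by apply: cat_subseq => //; exact: repl_sub.
Qed.

Lemma derB phi' psi' (P : pred nat) f : forall c, linear (plug c f) ->
  derivable_u (smr phi' psi') (plug c (repl Bot P f)) (plug c f).
Proof.
elim: f => [||x|x|a iha b ihb|a iha b ihb] c lf /=; try exact: rtc_refl.
- case: (P x); last exact: rtc_refl.
  by apply: rtc_step (stepB _ _ _ _ lf) (rtc_refl _ _).
- case: (P x); last exact: rtc_refl.
  by apply: rtc_step (stepB _ _ _ _ lf) (rtc_refl _ _).
- have l1 : linear (plug c (And a (repl Bot P b))).
    apply: lin_plug_sub lf => /=.
    by apply: cat_subseq => //; exact: repl_sub.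
  apply: rtc_trans (iha (CAL c _) l1) _.
  exact: (ihb (CAR _ c)).
- have l1 : linear (plug c (Or a (repl Bot P b))).
    apply: lin_plug_sub lf => /=.
    by apply: cat_subseq => //; exact: repl_sub.
  apply: rtc_trans (iha (COL c _) l1) _.
  exact: (ihb (COR _ c)).
Qed.

Lemma eval_ext s s' f : (forall x, x \in vars f -> s x = s' x) -> eval s f = eval s' f.
Proof.
elim: f => //= [x|x|a iha b ihb|a iha b ihb] H.
- by rewrite H // inE.
- by rewrite H // inE.
- by rewrite iha ?ihb // => x hx; apply: H; rewrite mem_cat hx ?orbT.
- by rewrite iha ?ihb // => x hx; apply: H; rewrite mem_cat hx ?orbT.
Qed.

Definition upd (s : nat -> bool) x b := fun y => if y == x then b else s y.

Lemma evalRep (k : form) (kb : bool) (P : pred nat) f :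
  vars k = [::] -> (forall s, eval s k = kb) -> linear f -> forall s, exists s',
  (forall x, (x \notin vars f) || ~~ P x -> s' x = s x) /\
  (if kb then eval s (repl k P f) -> eval s' f else eval s' f -> eval s (repl k P f)).
Proof.
move=> hk ek; elim: f => [||x|x|a iha b ihb|a iha b ihb] lf s /=.
- by exists s; case: (kb).
- by exists s; case: (kb).
- case Px: (P x); last by exists s; case: (kb).
  exists (upd s x kb); split; last by rewrite ek /upd eqxx; case: (kb).
  by move=> y; rewrite /upd inE; case: eqP => // ->; rewrite Px.
- case Px: (P x); last by exists s; case: (kb).
  exists (upd s x (~~ kb)); split; last by rewrite ek /upd eqxx; case: (kb).
  by move=> y; rewrite /upd inE; case: eqP => // ->; rewrite Px.
- move: lf; rewrite /linear /= cat_uniq => /and3P [la dis lb].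
  have [s1 [h1 e1]] := iha la s; have [s2 [h2 e2]] := ihb lb s1.
  have d : forall x, x \in vars a -> x \notin vars b.
    by move=> x xa; apply/negP => xb; move/hasP: dis; apply; exists x.
  have E1 : eval s2 a = eval s1 a.
    by apply: eval_ext => x xa; rewrite h2 // d.
  have E2 : eval s1 (repl k P b) = eval s (repl k P b).
    apply: eval_ext => x; rewrite mem_repl // => /andP [_ nP]; by rewrite h1 // nP orbT.
  exists s2; split.
    move=> x; rewrite mem_cat negb_or => hx.
    have [ha hb] : ((x \notin vars a) || ~~ P x) /\ ((x \notin vars b) || ~~ P x).
      by case/orP: hx => [/andP[-> ->]|->]; rewrite ?orbT.
    by rewrite h2 // h1.
  rewrite E1 -E2; case: (kb) e1 e2 => e1 e2.
    by move/andP=> [/e1 -> /e2 ->].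
  by move/andP=> [/e1 -> /e2 ->].
- move: lf; rewrite /linear /= cat_uniq => /and3P [la dis lb].
  have [s1 [h1 e1]] := iha la s; have [s2 [h2 e2]] := ihb lb s1.
  have d : forall x, x \in vars a -> x \notin vars b.
    by move=> x xa; apply/negP => xb; move/hasP: dis; apply; exists x.
  have E1 : eval s2 a = eval s1 a.
    by apply: eval_ext => x xa; rewrite h2 // d.
  have E2 : eval s1 (repl k P b) = eval s (repl k P b).
    apply: eval_ext => x; rewrite mem_repl // => /andP [_ nP]; by rewrite h1 // nP orbT.
  exists s2; split.
    move=> x; rewrite mem_cat negb_or => hx.
    have [ha hb] : ((x \notin vars a) || ~~ P x) /\ ((x \notin vars b) || ~~ P x).
      by case/orP: hx => [/andP[-> ->]|->]; rewrite ?orbT.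
    by rewrite h2 // h1.
  rewrite E1 -E2; case: (kb) e1 e2 => e1 e2.
    by move/orP=> [/e1 -> //|/e2 ->]; rewrite orbT.
  by move/orP=> [/e1 -> //|/e2 ->]; rewrite orbT.
Qed.

Lemma subst_id f : subst Var f = f.
Proof. by elim: f => //= a -> b ->. Qed.

Theorem proposition2p14 (phi psi : form) (V1 V2 : nat -> Prop) :
  linear_on phi V1 -> linear_on psi V2 -> linear_inference phi psi ->
  exists phi' psi' : form,
    linear_on phi' (fun x => V1 x /\ V2 x) /\
    linear_on psi' (fun x => V1 x /\ V2 x) /\
    linear_inference phi' psi' /\
    derivable_u (smr phi' psi') phi psi.
Proof.
move=> [l1 h1] [l2 h2] [_ [_ inf]].
pose P1 := fun x => x \notin vars psi.
pose P2 := fun x => x \notin vars phi.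
exists (repl Top P1 phi), (repl Bot P2 psi).
have lp1 : linear (repl Top P1 phi) by apply: subseq_uniq l1; exact: repl_sub.
have lp2 : linear (repl Bot P2 psi) by apply: subseq_uniq l2; exact: repl_sub.
split.
  split=> // x; rewrite mem_repl // /P1 negbK; split.
    by case/andP => /h1 ? /h2.
  by case => /h1 -> /h2.
split.
  split=> // x; rewrite mem_repl // /P2 negbK; split.
    by case/andP => /h2 ? /h1.
  by case => /h1 -> /h2 ->.
split.
  split=> //; split=> // s e.
  have [s1 [k1 e1]] := @evalRep Top true P1 phi erefl (fun _ => erefl) l1 s.
  have [s2 [k2 e2]] := @evalRep Bot false P2 psi erefl (fun _ => erefl) l2 s1.
  have ev1 := e1 e.
  have ev2 : eval s2 phi.
    by rewrite (@eval_ext s2 s1) // => x xa; rewrite k2 // /P2 xa orbT.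
  have := e2 (inf _ ev2).
  rewrite (@eval_ext s1 s) // => x; rewrite mem_repl // => /andP [xp _].
  by rewrite k1 // /P1 xp orbT.
apply: rtc_trans (derT _ _ P1 phi Hole l1) _.
apply: rtc_step; last exact: (derB _ _ P2 psi Hole l2).
split=> //; split=> //; left.
exists (repl Top P1 phi), (repl Bot P2 psi); split; first exact: cong_refl.
split; last exact: cong_refl.
have := @rstep_inst (smr (repl Top P1 phi) (repl Bot P2 psi)) (repl Top P1 phi) (repl Bot P2 psi) Var.
rewrite !subst_id; apply=> //; by right; right.
Qed.
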